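(* Let $\mathcal H$ be a well-structured preconditioner set and $\{f_t\}_{t\in\mathcal T}$ a family of random differentiable functions $\mathbb R^d\to\mathbb R$. Then $$\sigma_{\|\cdot\|_{\mathcal H,*}}(\{f_t\}_{t\in\mathcal T})^2\le\sigma_{\mathcal H}(\{f_t\}_{t\in\mathcal T})^2\le d\cdot\sigma_{\|\cdot\|_{\mathcal H,*}}(\{f_t\}_{t\in\mathcal T})^2.$$
   Context: $\mathcal S^d_+$ (resp. $\mathcal S^d_{++}$) denotes the set of real symmetric positive semidefinite (resp. positive definite) $d\times d$ matrices. A set $\mathcal H\subseteq\mathcal S_+^d$ is a well-structured preconditioner set if $\mathcal H=\mathcal S_+^d\cap\mathcal K$ for some set $\mathcal K$ of real $d\times d$ matrices that is closed under scalar multiplication, matrix addition and matrix multiplication and contains the identity $I_d$. For $H\in\mathcal S_+^d$, $\|x\|_H=\sqrt{x^\top Hx}$; $\|x\|_{\mathcal H}:=\sup_{H\in\mathcal H,\operatorname{Tr}(H)\le1}\|x\|_H$ and $\|y\|_{\mathcal H,*}:=\sup_{\|x\|_{\mathcal H}\le1}\langle x,y\rangle$. For a norm $\|\cdot\|$: $\sigma_{\|\cdot\|}(\{f_t\})^2:=\sup_{t\in\mathcal T,x\in\mathbb R^d}\mathbb E\|\nabla f_t(x)-\mathbb E[\nabla f_t(x)]\|^2$. Adaptive gradient variance: $\sigma_{\mathcal H}(\{f_t\})^2:=\inf_{H\in\mathcal H\cap\mathcal S^d_{++},\operatorname{Tr}(H)\le1}\sup_{t\in\mathcal T,x\in\mathbb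 R^d}\mathbb E\|\nabla f_t(x)-\mathbb E[\nabla f_t(x)]\|_{H^{-1}}^2$. *)

(* Defs.v *)
From HB Require Import structures.
From mathcomp Require Import all_boot all_order all_algebra.
From mathcomp Require Import all_classical all_reals all_analysis.
Set Implicit Arguments. Unset Strict Implicit. Unset Printing Implicit Defensive.
Import Order.TTheory GRing.Theory Num.Theory.
Import numFieldNormedType.Exports.
Local Open Scope classical_set_scope.
Local Open Scope ring_scope.

(* Vectors of R^d are row vectors 'rV[R]_d; x^T H x is (x *m H *m x^T) 0 0. *)
Definition quadf {R : realType} {d : nat} (A : 'M[R]_d) (x : 'rV[R]_d) : R :=
  (x *m A *m x^T) 0 0.

Definition psd {R : realType} {d : nat} (A : 'M[R]_d) : Prop :=
  A^T = A /\ forall x : 'rV[R]_d, 0 <= quadf A x.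

Definition pd {R : realType} {d : nat} (A : 'M[R]_d) : Prop :=
  A^T = A /\ forall x : 'rV[R]_d, x != 0 -> 0 < quadf A x.

Definition well_structured {R : realType} {d : nat} (H : set 'M[R]_d) : Prop :=
  exists K : set 'M[R]_d,
    [/\ (forall (a : R) A, K A -> K (a *: A)),
        (forall A B, K A -> K B -> K (A + B)),
        (forall A B, K A -> K B -> K (A *m B)),
        K 1%:M &
        H = [set A | psd A /\ K A]].

Definition Anorm {R : realType} {d : nat} (A : 'M[R]_d) (x : 'rV[R]_d) : R :=
  Num.sqrt (quadf A x).

Definition Hnorm {R : realType} {d : nat} (H : set 'M[R]_d) (x : 'rV[R]_d) : R :=
  sup [set Anorm A x | A in [set A | H A /\ \tr A <= 1]].

Definition Hdualnorm {R : realType} {d : nat} (H : set 'M[R]_d) (y : 'rV[R]_d) : R :=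
  sup [set (x *m y^T) 0 0 | x in [set x | Hnorm H x <= 1]].

Definition grad {R : realType} {d : nat} (F : 'rV[R]_d -> R) (x : 'rV[R]_d)
  : 'rV[R]_d := \row_i ('d F x (delta_mx 0 i)).

Section Variance.
Context {R : realType} {d : nat} {dsp : measure_display} {Omega : measurableType dsp}.
Variable (P : probability Omega R) (T : Type) (f : T -> Omega -> 'rV[R]_d -> R).

Definition mean_grad (t : T) (x : 'rV[R]_d) : 'rV[R]_d :=
  \row_i fine (\int[P]_w (grad (f t w) x 0 i)%:E)%E.

Definition cgrad (t : T) (x : 'rV[R]_d) (w : Omega) : 'rV[R]_d :=
  grad (f t w) x - mean_grad t x.

Definition sigma2_norm (N : 'rV[R]_d -> R) : \bar R :=
  ereal_sup [set v | exists (t : T) (x : 'rV[R]_d),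
              v = (\int[P]_w ((N (cgrad t x w)) ^+ 2)%:E)%E].

Definition sigma2_mat (A : 'M[R]_d) : \bar R :=
  ereal_sup [set v | exists (t : T) (x : 'rV[R]_d),
              v = (\int[P]_w (quadf (invmx A) (cgrad t x w))%:E)%E].

Definition sigma2_adaptive (H : set 'M[R]_d) : \bar R :=
  ereal_inf [set sigma2_mat A | A in [set A | H A /\ pd A /\ \tr A <= 1]].

End Variance.

(* Main.v *)
Require Import Defs.
From HB Require Import structures.
From mathcomp Require Import all_boot all_order all_algebra.
From mathcomp Require Import all_classical all_reals all_analysis.
From mathcomp Require Import ring lra.
Set Implicit Arguments. Unset Strict Implicit. Unset Printing Implicit Defensive.
Import Order.TTheory GRing.Theory Num.Theory.
Import numFieldNormedType.Exports.
Local Open Scope classical_set_scope.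
Local Open Scope ring_scope.

Section Alg.
Variables (R : realType) (d : nat).
Implicit Types (A : 'M[R]_d) (u v x y : 'rV[R]_d).

Definition bil A u v := (u *m A *m v^T) 0 0.

Lemma bilC A u v : A^T = A -> bil A v u = bil A u v.
Proof.
move=> sA; rewrite /bil.
have -> : (v *m A *m u^T) 0 0 = (v *m A *m u^T)^T 0 0 by rewrite [RHS]mxE.
by rewrite trmx_mul trmxK trmx_mul sA mulmxA.
Qed.

Lemma quadfD A u v s : A^T = A ->
  quadf A (u + s *: v) = quadf A u + 2 * s * bil A u v + s ^+ 2 * quadf A v.
Proof.
move=> sA; rewrite /quadf linearD linearZ /= !mulmxDl !mulmxDr.
rewrite -!scalemxAl -!scalemxAr.
have := bilC u v sA; rewrite /bil !mxE => ->.
ring.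
Qed.

Lemma cs A u v : psd A -> bil A u v ^+ 2 <= quadf A u * quadf A v.
Proof.
case=> sA pA.
have H s : 0 <= quadf A u + 2 * s * bil A u v + s ^+ 2 * quadf A v.
  by rewrite -quadfD //; exact: pA.
have a0 := pA u; have c0 := pA v.
move: H a0 c0; move: (quadf A u) (bil A u v) (quadf A v) => a b c H a0 c0.
have [c_0|cpos] := eqVneq c 0.
  subst c; rewrite mulr0.
  have [b_0|bn0] := eqVneq b 0; first by rewrite b_0 expr0n.
  have := H (- ((a + 1) / (2 * b))).
  have -> : a + 2 * - ((a + 1) / (2 * b)) * b + (- ((a + 1) / (2 * b))) ^+ 2 * 0 = -1.
    by field; rewrite bn0.
  by rewrite ler0N1.
have cp : 0 < c by rewrite lt0r cpos.
have := H (- (b / c)).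
have -> : a + 2 * - (b / c) * b + (- (b / c)) ^+ 2 * c = (a * c - b ^+ 2) / c.
  by field.
by rewrite pmulr_lge0 ?invr_gt0 // subr_ge0 mulrC.
Qed.


Definition nrm x := (x *m x^T) 0 0.

Lemma rv_delta (M : 'rV[R]_d) (j : 'I_d) : (M *m (delta_mx 0 j : 'rV[R]_d)^T) 0 0 = M 0 j.
Proof.
rewrite mxE (bigD1 j) //= big1 => [|k kj]; rewrite !mxE ?eqxx /=.
  by rewrite mulr1 addr0.
by rewrite (negbTE kj) mulr0.
Qed.

Lemma quad_delta A (j : 'I_d) : quadf A (delta_mx 0 j : 'rV[R]_d) = A j j.
Proof. by rewrite /quadf -rowE rv_delta mxE. Qed.

Lemma quadf_sum A x : quadf A x = \sum_j (x *m A) 0 j * x 0 j.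
Proof. by rewrite /quadf mxE; under eq_bigr => j _ do rewrite [x^T _ _]mxE. Qed.

Lemma nrm_sum x : nrm x = \sum_j x 0 j ^+ 2.
Proof. by rewrite /nrm mxE; under eq_bigr => j _ do rewrite [x^T _ _]mxE -expr2. Qed.

Lemma nrm_ge0 x : 0 <= nrm x.
Proof. by rewrite nrm_sum; apply: sumr_ge0 => j _; exact: sqr_ge0. Qed.

Lemma quad_le_tr A x : psd A -> \tr A <= 1 -> quadf A x <= nrm x.
Proof.
move=> pA tA; have q0 : 0 <= quadf A x by case: pA => _; apply.
have h2 : \sum_j ((x *m A) 0 j) ^+ 2 <= quadf A x * \tr A.
  rewrite /mxtrace mulr_sumr; apply: ler_sum => j _.
  by have := cs x (delta_mx 0 j : 'rV[R]_d) pA; rewrite /bil rv_delta quad_delta.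
have h1 : 2 * quadf A x <= nrm x + \sum_j ((x *m A) 0 j) ^+ 2.
  rewrite quadf_sum nrm_sum -big_split mulr_sumr /=; apply: ler_sum => j _.
  have := sqr_ge0 (x 0 j - (x *m A) 0 j); rewrite sqrrB; lra.
have : quadf A x * \tr A <= quadf A x by rewrite ler_piMr.
lra.
Qed.


Variable H : set 'M[R]_d.
Hypothesis HP : forall A, H A -> psd A.
Hypothesis H0 : H 0.

Let Hset x := [set Anorm A x | A in [set A | H A /\ \tr A <= 1]].

Lemma Hset_ub x : ubound (Hset x) (Num.sqrt (nrm x)).
Proof.
move=> _ [A [HA tA] <-]; rewrite /Anorm; apply: ler_wsqrtr.
exact: quad_le_tr (HP HA) tA.
Qed.

Lemma Hset_n0 x : Hset x !=set0.
Proof. by exists (Anorm 0 x); exists 0 => //; split => //; rewrite mxtrace0. Qed.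

Lemma Anorm_le_Hnorm A x : H A -> \tr A <= 1 -> Anorm A x <= Hnorm H x.
Proof.
move=> HA tA; have := sup_upper_bound (conj (@Hset_n0 x) (ex_intro _ _ (@Hset_ub x))).
by apply; exists A.
Qed.

Lemma Hnorm_le x : Hnorm H x <= Num.sqrt (nrm x).
Proof. exact: ge_sup (@Hset_n0 x) (@Hset_ub x). Qed.

Lemma quadf_le1 A x : H A -> \tr A <= 1 -> Hnorm H x <= 1 -> quadf A x <= 1.
Proof.
move=> HA tA h1; have := le_trans (@Anorm_le_Hnorm A x HA tA) h1.
have q0 : 0 <= quadf A x by case: (HP HA) => _; apply.
rewrite /Anorm => h; rewrite -(sqr_sqrtr q0).
move: h (sqrtr_ge0 (quadf A x)); move: (Num.sqrt (quadf A x)) => r; nra.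
Qed.

Lemma pd_unit A : pd A -> A \in unitmx.
Proof.
case=> _ pA; rewrite unitmxE unitfE; apply/negP => /det0P [v v0 vA].
by have := pA v v0; rewrite /quadf vA mul0mx mxE ltxx.
Qed.

Lemma dual_el A x y : H A -> pd A -> \tr A <= 1 -> Hnorm H x <= 1 ->
  ((x *m y^T) 0 0) ^+ 2 <= quadf (invmx A) y.
Proof.
move=> HA pdA tA hx; have uA := pd_unit pdA.
have sA : A^T = A by case: (HP HA).
have := cs x (y *m invmx A) (HP HA).
have -> : bil A x (y *m invmx A) = (x *m y^T) 0 0.
  by rewrite /bil trmx_mul trmx_inv sA !mulmxA -(mulmxA x A) mulmxV // mulmx1.
have -> : quadf A (y *m invmx A) = quadf (invmx A) y.
  by rewrite /quadf mulmxKV // trmx_mul trmx_inv sA mulmxA.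
have Q0 : 0 <= quadf (invmx A) y.
  have -> : quadf (invmx A) y = quadf A (y *m invmx A).
    by rewrite /quadf mulmxKV // trmx_mul trmx_inv sA mulmxA.
  by case: (HP HA) => _; apply.
have q1 := @quadf_le1 A x HA tA hx.
have q0 : 0 <= quadf A x by case: (HP HA) => _; apply.
nra.
Qed.


Lemma nrm0 : nrm 0 = 0.
Proof. by rewrite /nrm mul0mx mxE. Qed.

Lemma Hnorm0 : Hnorm H 0 <= 1.
Proof. by apply: le_trans (Hnorm_le 0) _; rewrite nrm0 sqrtr0. Qed.

Let Dset y := [set (x *m y^T) 0 0 | x in [set x | Hnorm H x <= 1]].

Lemma Dset_n0 y : Dset y !=set0.
Proof. by exists (((0 : 'rV[R]_d) *m y^T) 0 0); exists 0 => //; exact: Hnorm0. Qed.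

Variable A0 : 'M[R]_d.
Hypotheses (HA0 : H A0) (pdA0 : pd A0) (tA0 : \tr A0 <= 1).

Lemma Dset_ub y : ubound (Dset y) (Num.sqrt (quadf (invmx A0) y)).
Proof.
move=> _ [x hx <-]; apply: le_trans (ler_norm _) _.
rewrite -sqrtr_sqr; apply: ler_wsqrtr; exact: dual_el.
Qed.

Lemma Dset_sup y : has_sup (Dset y).
Proof. by split; [exact: Dset_n0 | exists (Num.sqrt (quadf (invmx A0) y)); exact: Dset_ub]. Qed.

Lemma Hdual_ge0 y : 0 <= Hdualnorm H y.
Proof.
have := sup_upper_bound (Dset_sup y); apply; exists 0; first exact: Hnorm0.
by rewrite mul0mx mxE.
Qed.

Lemma Hdual_le y : Hdualnorm H y ^+ 2 <= quadf (invmx A0) y.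
Proof.
have h : Hdualnorm H y <= Num.sqrt (quadf (invmx A0) y) := ge_sup (Dset_n0 y) (@Dset_ub y).
have Q0 : 0 <= quadf (invmx A0) y.
  by apply: le_trans (@dual_el A0 0 y HA0 pdA0 tA0 Hnorm0); exact: sqr_ge0.
have g0 := Hdual_ge0 y; rewrite -(sqr_sqrtr Q0).
move: h g0 (sqrtr_ge0 (quadf (invmx A0) y)).
move: (Num.sqrt (quadf (invmx A0) y)) (Hdualnorm H y) => r h; nra.
Qed.


Lemma nrm_scale a y : nrm (a *: y) = a ^+ 2 * nrm y.
Proof.
rewrite /nrm linearZ /= -scalemxAl -scalemxAr scalerA.
by move: (y *m y^T) => M; rewrite mxE expr2.
Qed.

Lemma nrm_le_Hdual y : nrm y <= Hdualnorm H y ^+ 2.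
Proof.
have n0 := nrm_ge0 y.
have [->|nz] := eqVneq (nrm y) 0; first exact: sqr_ge0.
have np : 0 < nrm y by rewrite lt0r nz.
have rp : 0 < Num.sqrt (nrm y) by rewrite sqrtr_gt0.
have rr := sqr_sqrtr n0.
move: rp rr; set r := Num.sqrt (nrm y) => rp rr.
have hx : Hnorm H (r^-1 *: y) <= 1.
  apply: le_trans (Hnorm_le _) _; rewrite nrm_scale -rr.
  have -> : r^-1 ^+ 2 * r ^+ 2 = 1 by field; rewrite gt_eqF.
  by rewrite sqrtr1.
have el : ((r^-1 *: y) *m y^T) 0 0 = r.
  have sc : forall (a : R) (M : 'M[R]_1), (a *: M) 0 0 = a * M 0 0 by move=> a M; rewrite mxE.
  by rewrite -scalemxAl sc -/(nrm y) -rr; field; rewrite gt_eqF.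
have : r <= Hdualnorm H y.
  by have := sup_upper_bound (Dset_sup y); apply; exists (r^-1 *: y).
have := Hdual_ge0 y; nra.
Qed.

End Alg.

Unset Implicit Arguments.

Lemma mono_int (R : realType) dsp (Omega : measurableType dsp)
  (mu : {measure set Omega -> \bar R}) (f1 f2 : Omega -> \bar R) :
  (forall x, 0 <= f1 x)%E -> (forall x, f1 x <= f2 x)%E ->
  (\int[mu]_x f1 x <= \int[mu]_x f2 x)%E.
Proof.
move=> f0 f12.
have f20 : forall x, (0 <= f2 x)%E by move=> x; exact: le_trans (f0 x) (f12 x).
rewrite !ge0_integralTE //.
apply: ereal_sup_le => _ [g gf <-]; exists g => //= x.
exact: le_trans (gf x) (f12 x).
Qed.

Lemma quadf_scalar (R : realType) (d : nat) (a : R) (x : 'rV[R]_d) :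
  quadf (a%:M) x = a * nrm x.
Proof.
rewrite /quadf mul_mx_scalar -scalemxAl /nrm.
by move: (x *m x^T) => M; rewrite mxE.
Qed.

Lemma nrm_pos (R : realType) (d : nat) (x : 'rV[R]_d) :
  x != 0 -> (0 < d)%N /\ 0 < nrm x.
Proof.
move=> x0.
case/boolP: [exists j, x 0 j != 0] => [/existsP[j xj]|/existsPn h]; last first.
  case/eqP: x0; apply/matrixP => i k; rewrite (ord1 i) !mxE.
  by have := h k; rewrite negbK => /eqP.
split; first by apply: leq_ltn_trans (ltn_ord j).
rewrite nrm_sum (bigD1 j) //=.
have : 0 < x 0 j ^+ 2 by rewrite exprn_even_gt0.
have : 0 <= \sum_(i | i != j) x 0 i ^+ 2 by apply: sumr_ge0 => i _; exact: sqr_ge0.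
lra.
Qed.

Theorem proposition4p1 (R : realType) (d : nat) (H : set 'M[R]_d)
    (hH : well_structured H)
    (dsp : measure_display) (Omega : measurableType dsp)
    (P : probability Omega R) (T : Type) (f : T -> Omega -> 'rV[R]_d -> R)
    (hdiff : forall (t : T) (w : Omega) (x : 'rV[R]_d), differentiable (f t w) x)
    (hint : forall (t : T) (x : 'rV[R]_d) (i : 'I_d),
       P.-integrable setT (fun w => (grad (f t w) x 0 i)%:E)) :
  (sigma2_norm P f (Hdualnorm H) <= sigma2_adaptive P f H)%E /\
  (sigma2_adaptive P f H <= d%:R%:E * sigma2_norm P f (Hdualnorm H))%E.
Proof.
case: hH => K [Ksc Kadd Kmul K1 HE].
have HP : forall A, H A -> psd A by move=> A; rewrite HE => -[].
have H0 : H 0.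
  rewrite HE; split; last by have := Ksc 0 1%:M K1; rewrite scale0r.
  split; first by rewrite trmx0.
  by move=> x; rewrite /quadf mulmx0 mul0mx mxE.
split.
  apply/ereal_infP => _ [A [HA [pdA tA]] <-].
  apply: ge_ereal_sup => _ [t [x ->]].
  apply: le_ereal_sup_tmp; exists (\int[P]_w (quadf (invmx A) (cgrad P f t x w))%:E)%E.
    by exists t, x.
  apply: mono_int => w; first by rewrite lee_fin sqr_ge0.
  by rewrite lee_fin; exact: (Hdual_le HP H0 HA pdA tA).
pose A0 : 'M[R]_d := (d%:R^-1)%:M.
have HA0 : H A0.
  rewrite HE; split; last by rewrite /A0 -scalemx1; exact: Ksc.
  split; first by rewrite /A0 tr_scalar_mx.
  move=> x; rewrite /A0 quadf_scalar; apply: mulr_ge0; last exact: nrm_ge0.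
  by rewrite invr_ge0.
have pdA0 : pd A0.
  split; first by rewrite /A0 tr_scalar_mx.
  move=> x /nrm_pos [dp np]; rewrite /A0 quadf_scalar mulr_gt0 // invr_gt0.
  by rewrite ltr0n.
have tA0 : \tr A0 <= 1.
  rewrite /A0 mxtrace_scalar.
  have -> : (d%:R^-1 : R) *+ d = d%:R^-1 * d%:R by rewrite mulr_natr.
  have [->|nz] := eqVneq (d%:R : R) 0; first by rewrite mulr0.
  by rewrite mulVf.
apply: le_trans (ereal_inf_lbound _) _.
  by exists A0.
apply: ge_ereal_sup => _ [t [x ->]].
have meas : measurable_fun [set: Omega] (fun w => nrm (cgrad P f t x w)).
  have -> : (fun w => nrm (cgrad P f t x w)) =
            (fun w => \sum_j (grad (f t w) x 0 j - mean_grad P f t x 0 j) ^+ 2).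
    apply: funext => w; rewrite nrm_sum /cgrad.
    have hB : forall (U V : 'rV[R]_d) j, (U - V) 0 j = U 0 j - V 0 j.
      by move=> U V j; rewrite !mxE.
    by under eq_bigr => j _ do rewrite hB.
  apply: measurable_sum => j; rewrite /=.
  have mg : measurable_fun setT (fun w => grad (f t w) x 0 j - mean_grad P f t x 0 j).
    apply: measurable_realfun.measurable_funB; last exact: measurable_cst.
    by have /integrableP[+ _] := hint t x j => /measurable_realfun.measurable_EFinP.
  under eq_fun do rewrite expr2.
  exact: measurable_realfun.measurable_funM.
have -> : (fun w => (quadf (invmx A0) (cgrad P f t x w))%:E) =
          (fun w => (d%:R)%:E * (nrm (cgrad P f t x w))%:E)%E.
  apply: funext => w; rewrite /A0 invmx_scalar invrK quadf_scalar.
  by rewrite EFinM.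
rewrite ge0_integralZl //; [| exact/measurable_realfun.measurable_EFinP |
  by move=> w _; rewrite lee_fin nrm_ge0].
apply: lee_wpmul2l; first by rewrite lee_fin ler0n.
apply: le_trans (_ : _ <= \int[P]_w ((Hdualnorm H (cgrad P f t x w)) ^+ 2)%:E)%E _.
  apply: mono_int => w; first by rewrite lee_fin nrm_ge0.
  by rewrite lee_fin; exact: (nrm_le_Hdual HP H0 HA0 pdA0 tA0).
by apply: ereal_sup_ubound; exists t, x.
Qed.
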